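(* Let $L$ be a finite lattice, $C$ a nonempty convex subset of $L$, and $L[C]$ the doubling. For $a\in I_L(C)$, the element $(a,0)\in L[C]$ is left modular in $L[C]$ if and only if $a$ is left modular in $L$ and $a$ is below every maximal element of $C$. For $a\in (L\setminus I_L(C))\cup C$, the element $(a,1)\in L[C]$ is left modular in $L[C]$ if and only if $a$ is left modular in $L$ and $a$ is above every minimal element of $C$. Consequently, for $a\in C$, both $(a,0)$ and $(a,1)$ are left modular in $L[C]$ if and only if $a$ is left modular in $L$ and $a\in H(C)$.
   Context: A subset $C$ is convex if $x,y\in C$ implies $[x,y]\subseteq C$. $I_L(C)=\{y\in L\mid\exists x\in C,\ y\le x\}$. The doubling $L[C]$ is the subposet of $L\times\{0<1\}$ (product order) on $\big(I_L(C)\times\{0\}\big)\sqcup\big(((L\setminus I_L(C))\cup C)\times\{1\}\big)$; it is a lattice. The heart $H(C)$ is the set of elements of $C$ below all maximal elements of $C$ and above all minimal elements of $C$. An element $a$ of a lattice is left modular if for all $b<c$ one has $(b\vee a)\wedge c=b\vee(a\wedge c)$. *)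

(* Defs.v *)
From HB Require Import structures.
From mathcomp Require Import all_boot all_order.
Set Implicit Arguments. Unset Strict Implicit. Unset Printing Implicit Defensive.
Import Order.TTheory.
Local Open Scope order_scope.

Section Doubling.
Context {disp : Order.disp_t} {L : finLatticeType disp}.

Definition convex (C : {set L}) : Prop :=
  forall x y z : L, x \in C -> y \in C -> x <= z -> z <= y -> z \in C.

Definition downset (C : {set L}) : {set L} :=
  [set y | [exists x in C, y <= x]].

Definition maximal_in (C : {set L}) (m : L) : Prop :=
  m \in C /\ forall y, y \in C -> m <= y -> y = m.
Definition minimal_in (C : {set L}) (m : L) : Prop :=
  m \in C /\ forall y, y \in C -> y <= m -> y = m.

Definition heart (C : {set L}) (x : L) : Prop :=
  x \in C /\ (forall m, maximal_in C m -> x <= m) /\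
  (forall m, minimal_in C m -> m <= x).

Definition left_modular (a : L) : Prop :=
  forall b c : L, b < c -> (b `|` a) `&` c = b `|` (a `&` c).

(* the carrier of the doubling L[C] as a subset of L x {0<1} (false = 0) *)
Definition in_dbl (C : {set L}) (p : L * bool) : bool :=
  if p.2 then (p.1 \notin downset C) || (p.1 \in C) else p.1 \in downset C.

Definition dle (p q : L * bool) : bool := (p.1 <= q.1) && (p.2 ==> q.2).
Definition dlt (p q : L * bool) : bool := dle p q && (p != q).

Definition is_join_dbl (C : {set L}) (x y z : L * bool) : Prop :=
  [/\ in_dbl C z, dle x z, dle y z &
      forall w, in_dbl C w -> dle x w -> dle y w -> dle z w].
Definition is_meet_dbl (C : {set L}) (x y z : L * bool) : Prop :=
  [/\ in_dbl C z, dle z x, dle z y &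
      forall w, in_dbl C w -> dle w x -> dle w y -> dle w z].

(* left modularity of a in the lattice L[C]: for all b < c in L[C],
   (b v a) ^ c = b v (a ^ c), with joins/meets taken in L[C]
   (they exist and are unique since L[C] is a lattice). *)
Definition left_modular_dbl (C : {set L}) (a : L * bool) : Prop :=
  forall b c : L * bool, in_dbl C b -> in_dbl C c -> dlt b c ->
  forall u v w z,
    is_join_dbl C b a u -> is_meet_dbl C u c v ->
    is_meet_dbl C a c w -> is_join_dbl C b w z -> v = z.

End Doubling.

(* Main.v *)
Require Import Defs.
From mathcomp Require Import all_boot all_order.
Set Implicit Arguments. Unset Strict Implicit. Unset Printing Implicit Defensive.
Import Order.TTheory.
Local Open Scope order_scope.

Section H.
Context {disp : Order.disp_t} {L : finLatticeType disp}.
Variable C : {set L}.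
Hypothesis hconv : convex C.

Definition iota (x : L) := (x \notin downset C) || (x \in C).
Definition jn (x y : L * bool) : L * bool :=
  (x.1 `|` y.1, [|| x.2, y.2 | x.1 `|` y.1 \notin downset C]).
Definition mt (x y : L * bool) : L * bool :=
  (x.1 `&` y.1, [&& x.2, y.2 & iota (x.1 `&` y.1)]).

Lemma down_le x y : y <= x -> x \in downset C -> y \in downset C.
Proof.
move=> yx /[!inE] /existsP[c /andP[cC xc]]; apply/existsP; exists c.
by rewrite cC (le_trans yx xc).
Qed.

Lemma C_down x : x \in C -> x \in downset C.
Proof. by move=> xC; rewrite inE; apply/existsP; exists x; rewrite xC lexx. Qed.

Lemma conv_up x y : x \in C -> x <= y -> y \in downset C -> y \in C.
Proof.
move=> xC xy /[!inE] /existsP[c /andP[cC yc]]; exact: (hconv xC cC xy yc).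
Qed.

Lemma iota_up x y : iota x -> x <= y -> iota y.
Proof.
rewrite /iota => /orP[xD|xC] xy; case: (boolP (y \in downset C)) => //= yD.
- by rewrite (down_le xy yD) in xD.
- exact: conv_up xC xy yD.
Qed.

Lemma in_dbl_iota x : in_dbl C (x, true) = iota x. Proof. by []. Qed.
Lemma in_dbl_f x : in_dbl C (x, false) = (x \in downset C). Proof. by []. Qed.

Lemma jn_in x y : in_dbl C x -> in_dbl C y -> in_dbl C (jn x y).
Proof.
case: x => x i; case: y => y j; rewrite /jn /in_dbl /=.
case: i => [xi|xD]; case: j => [yj|yD] /=;
  try by apply: iota_up (leUl _ _) ; try exact: xi.
- exact: iota_up yj (leUr _ _).
- by case: (boolP (_ \in _)).
Qed.

Lemma mt_in x y : in_dbl C x -> in_dbl C y -> in_dbl C (mt x y).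
Proof.
case: x => x i; case: y => y j; rewrite /mt /in_dbl /=.
case: i => [xi|xD]; case: j => [yj|yD] /=.
- by case: (boolP (iota _)) => //; rewrite /iota negb_or => /andP[/negPn].
- exact: down_le (leIr _ _) yD.
- exact: down_le (leIl _ _) xD.
- exact: down_le (leIl _ _) xD.
Qed.

Lemma jn_spec x y z : in_dbl C x -> in_dbl C y -> is_join_dbl C x y z -> z = jn x y.
Proof.
move=> xi yi [zi xz yz zmin].
have : dle z (jn x y).
  apply: zmin (jn_in xi yi) _ _; rewrite /dle /jn /= ?leUl ?leUr /=;
  by case: (x.2); case: (y.2).
case: x y z xi yi zi xz yz {zmin} => x i [y j] [z k] /= xi yi zi.
rewrite /dle /jn /= => /andP[xz ik] /andP[yz jk] /andP[zj kj].
have e1 : z = x `|` y by apply/le_anti; rewrite zj leUx xz yz.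
subst z; congr pair.
move: ik jk kj zi xi yi; rewrite /in_dbl /=.
by case: i; case: j; case: k => //=; case: (_ \in _).
Qed.

Lemma mt_spec x y z : in_dbl C x -> in_dbl C y -> is_meet_dbl C x y z -> z = mt x y.
Proof.
move=> xi yi [zi zx zy zmax].
have : dle (mt x y) z.
  apply: zmax (mt_in xi yi) _ _; rewrite /dle /mt /= ?leIl ?leIr /=;
  by case: (x.2); case: (y.2) => //=; rewrite implybT.
case: x y z xi yi zi zx zy {zmax} => x i [y j] [z k] /= xi yi zi.
rewrite /dle /mt /= => /andP[zx ki] /andP[zy kj] /andP[jz jk].
have e1 : z = x `&` y by apply/le_anti; rewrite jz lexI zx zy.
subst z; congr pair.
move: ki kj jk zi xi yi; rewrite /in_dbl /iota /=.
by case: i; case: j; case: k => //=; case: (x `&` y \in downset C); case: (x `&` y \in C).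
Qed.

Lemma jn_is x y : in_dbl C x -> in_dbl C y -> is_join_dbl C x y (jn x y).
Proof.
move=> xi yi; split; first exact: jn_in.
- by rewrite /dle /jn /= leUl /=; case: (x.2).
- by rewrite /dle /jn /= leUr /=; case: (y.2); rewrite ?orbT.
case=> w k wi; rewrite /dle /jn /= => /andP[xw ik] /andP[yw jk].
have -> : x.1 `|` y.1 <= w by rewrite leUx xw yw.
case: k wi ik jk => wD; rewrite ?implybT // !implybF => /negbTE-> /negbTE-> /=.
by rewrite negbK; apply: down_le wD; rewrite leUx xw yw.
Qed.

Lemma mt_is x y : in_dbl C x -> in_dbl C y -> is_meet_dbl C x y (mt x y).
Proof.
move=> xi yi; split; first exact: mt_in.
- by rewrite /dle /mt /= leIl /=; case: (x.2); rewrite /= ?implybT.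
- by rewrite /dle /mt /= leIr /=; case: (x.2); case: (y.2); rewrite /= ?implybT.
case=> w k wi; rewrite /dle /mt /= => /andP[wx ki] /andP[wy kj].
rewrite lexI wx wy /=; case: k wi ki kj => //= wiota /= -> -> /=.
apply: iota_up wiota _; by rewrite lexI wx wy.
Qed.

Lemma lmd_iff a : in_dbl C a -> left_modular_dbl C a <->
  forall b c, in_dbl C b -> in_dbl C c -> dlt b c -> mt (jn b a) c = jn b (mt a c).
Proof.
move=> ai; split.
- move=> H b c bi ci bc; apply: (H b c bi ci bc).
  + exact: jn_is.
  + apply: mt_is => //; exact: jn_in.
  + exact: mt_is.
  + apply: jn_is => //; exact: mt_in.
- move=> H b c bi ci bc u v w z hu hv hw hz.
  have eu := jn_spec bi ai hu; subst u.
  have ew := mt_spec ai ci hw; subst w.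
  rewrite (mt_spec (jn_in bi ai) ci hv) (jn_spec bi (mt_in ai ci) hz).
  exact: H.
Qed.

Definition emb (x : L) : L * bool := (x, x \notin downset C).

Lemma emb_in x : in_dbl C (emb x).
Proof. by rewrite /emb /in_dbl /=; case: (boolP (x \in downset C)) => //= ->. Qed.

Lemma lmd_lm A : in_dbl C A -> left_modular_dbl C A -> left_modular A.1.
Proof.
move=> Ai /(lmd_iff Ai) H b c bc.
have := H (emb b) (emb c) (emb_in b) (emb_in c).
rewrite /dlt /dle /emb /= (ltW bc) /=.
have -> : (b, b \notin downset C) != (c, c \notin downset C).
  by apply/negP => /eqP [] /eqP; rewrite (lt_eqF bc).
rewrite andbT.
have -> : (b \notin downset C) ==> (c \notin downset C).
  apply/implyP; apply: contra => cD; exact: down_le (ltW bc) cD.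
by move=> /(_ isT) [].
Qed.

Lemma ex_max x : x \in C -> exists m, maximal_in C m /\ x <= m.
Proof.
move=> xC.
pose S := [set y in C | x <= y].
have xS : x \in S by rewrite inE xC lexx.
case: (@arg_maxnP L x (fun y => y \in S) (fun y => #|[set z | z <= y]|) xS) => m /= + mmax.
rewrite inE => /andP[mC xm]; exists m; split => //; split => // y yC my.
apply/eqP; rewrite eq_sym eq_le my /=; apply/negP => /negP ny.
have lt_my : m < y by rewrite lt_neqAle my andbT; apply: contraNneq ny => ->.
have : (#|[set z | (z <= m)%O]| < #|[set z | (z <= y)%O]|)%N.
  apply: proper_card; apply/properP; split.
  - apply/subsetP => z; rewrite !inE => zm; exact: le_trans zm my.
  - by exists y; rewrite !inE ?lexx // ; apply/negP => ym; move: ny; rewrite ym.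
by rewrite ltnNge mmax // inE yC (le_trans xm my).
Qed.

Lemma ex_min x : x \in C -> exists m, minimal_in C m /\ m <= x.
Proof.
move=> xC.
pose S := [set y in C | y <= x].
have xS : x \in S by rewrite inE xC lexx.
case: (@arg_maxnP L x (fun y => y \in S) (fun y => #|[set z | y <= z]|) xS) => m /= + mmax.
rewrite inE => /andP[mC xm]; exists m; split => //; split => // y yC my.
apply/eqP; rewrite eq_le my /=; apply/negP => /negP ny.
have lt_my : y < m by rewrite lt_neqAle my andbT; apply: contraNneq ny => ->.
have : (#|[set z | (m <= z)%O]| < #|[set z | (y <= z)%O]|)%N.
  apply: proper_card; apply/properP; split.
  - apply/subsetP => z; rewrite !inE => zm; exact: le_trans my zm.
  - by exists y; rewrite !inE ?lexx // ; apply/negP => ym; move: ny; rewrite ym.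
by rewrite ltnNge mmax // inE yC (le_trans my xm).
Qed.

Lemma lm_eq (a b c : L) : left_modular a -> b <= c -> (b `|` a) `&` c = b `|` (a `&` c).
Proof.
move=> lm bc; case: (boolP (b == c)) => [/eqP<-|nbc].
  by rewrite meetC joinKI meetKUC.
by apply: lm; rewrite lt_neqAle nbc bc.
Qed.

Lemma part1 (a : L) : a \in downset C -> (left_modular_dbl C (a, false) <->
      left_modular a /\ forall m, maximal_in C m -> a <= m).
Proof.
move=> aD; split.
- move=> H; split; first exact: (@lmd_lm (a, false) aD H).
  move=> m [mC mmax]; move/(@lmd_iff (a, false) aD): H => H.
  have := H (m, false) (m, true) (C_down mC).
  rewrite in_dbl_iota /iota mC orbT /dlt /dle /= lexx xpair_eqE eqxx /= => /(_ isT isT).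
  rewrite /jn /mt /= meetC joinKI meetKUC (C_down mC) /=.
  rewrite /iota mC orbT andbT; case => /negbFE maD.
  have mac : m `|` a \in C by apply: conv_up mC (leUl _ _) maD.
  by rewrite -(mmax _ mac (leUl _ _)) leUr.
- case=> lm amax; apply/(@lmd_iff (a, false) aD).
  case=> b i [c j] bi ci; rewrite /dlt /dle /= => /andP[/andP[bc ij] _].
  rewrite /jn /mt /= (lm_eq lm bc); congr pair.
  set x := b `|` (a `&` c).
  have xc : x <= c by rewrite leUx bc leIr.
  have bx : b <= x by rewrite leUl.
  have xba : x <= b `|` a by rewrite leU2 ?lexx ?leIl.
  move: bi ci ij; rewrite /in_dbl /=.
  case: i => [bi|bD].
    by case: j => // _ _; rewrite (iota_up bi bx).
  case: (boolP (x \in downset C)) => xD /=.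
  + move=> _ _; apply/negP => /and3P[baD jt ix].
    have xC : x \in C by move: ix; rewrite /iota xD.
    have [m [mm xm]] := ex_max xC.
    have bam : b `|` a <= m by rewrite leUx (le_trans bx xm) amax.
    by move: baD; rewrite (down_le bam (C_down mm.1)).
  + case: j => ci _.
      by rewrite /iota xD /= andbT; apply: contra xD; exact: down_le.
    by rewrite (down_le xc ci) in xD.
Qed.

Lemma part2 (a : L) : iota a -> (left_modular_dbl C (a, true) <->
      left_modular a /\ forall m, minimal_in C m -> m <= a).
Proof.
move=> ai; split.
- move=> H; split; first exact: (@lmd_lm (a, true) ai H).
  move=> m [mC mmin]; move/(@lmd_iff (a, true) ai): H => H.
  have := H (m, false) (m, true) (C_down mC).
  rewrite in_dbl_iota /iota mC orbT /dlt /dle /= lexx xpair_eqE eqxx /= => /(_ isT isT).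
  rewrite /jn /mt /= meetC joinKI meetKUC (C_down mC) /= orbF /iota mC orbT.
  case=> /esym /orP[amD|amC].
    by move: amD; rewrite (down_le (leIr _ _) (C_down mC)).
  by rewrite -(mmin _ amC (leIr _ _)) leIl.
- case=> lm amin; apply/(@lmd_iff (a, true) ai).
  case=> b i [c j] bi ci; rewrite /dlt /dle /= => /andP[/andP[bc ij] _].
  rewrite /jn /mt /= (lm_eq lm bc); congr pair.
  set x := b `|` (a `&` c).
  have xc : x <= c by rewrite leUx bc leIr.
  have bx : b <= x by rewrite leUl.
  have acx : a `&` c <= x by rewrite leUr.
  move: bi ci ij; rewrite /in_dbl /=.
  case: j => bi ci; last first.
    by case: i bi => // bD _; rewrite (down_le xc ci).
  move=> _.
  case: (boolP (x \in downset C)) => xD /=; last by rewrite /iota xD !orbT.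
  rewrite {1}/iota xD /=.
  case: i bi => bi /=.
    by have := iota_up bi bx; rewrite /iota xD.
  rewrite orbF; apply/idP/idP.
  + move=> xC; have [m [mm mx]] := ex_min xC.
    have mac : m <= a `&` c by rewrite lexI amin // (le_trans mx xc).
    by rewrite /iota (conv_up mm.1 mac (down_le acx xD)) orbT.
  + by move=> h; have := iota_up h acx; rewrite /iota xD.
Qed.
End H.

Theorem proposition3p16 (disp : Order.disp_t) (L : finLatticeType disp)
  (C : {set L}) (hconv : convex C) (hne : C != set0) :
  (forall a : L, a \in downset C ->
     (left_modular_dbl C (a, false) <->
      left_modular a /\ forall m, maximal_in C m -> a <= m)) /\
  (forall a : L, (a \notin downset C) || (a \in C) ->
     (left_modular_dbl C (a, true) <->
      left_modular a /\ forall m, minimal_in C m -> m <= a)) /\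
  (forall a : L, a \in C ->
     (left_modular_dbl C (a, false) /\ left_modular_dbl C (a, true) <->
      left_modular a /\ heart C a)).
Proof.
split; [|split].
- by move=> a aD; apply: part1.
- by move=> a ai; apply: part2.
- move=> a aC.
  have aD := C_down aC.
  have ai : iota C a by rewrite /iota aC orbT.
  split.
  + case=> /(part1 hconv aD) [lm mx] /(part2 hconv ai) [_ mn].
    by split => //; split => //; split.
  + case=> lm [_ [mx mn]]; split.
    * by apply/(part1 hconv aD).
    * by apply/(part2 hconv ai).
Qed.
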